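(* Up to isomorphism, there is exactly one tournament $T$ on the vertex set $\{0,1,2,3,4,5\}$ such that for every $i,j\in\{0,1,2,3,4,5\}$ and every $k\in\{3,4,5\}$ there are a directed walk of length $k$ from $i$ to $j$ and a directed walk of length $k$ from $j$ to $i$.
   Context: A tournament is a digraph in which every pair of distinct vertices is joined by exactly one arc. A directed walk of length $k$ from $i$ to $j$ is a sequence of vertices $(v_0=i,v_1,\ldots,v_k=j)$ (repetitions allowed) with $(v_{t},v_{t+1})$ an arc for each $t$. *)

(* Defs.v *)
From mathcomp Require Import all_boot.
Set Implicit Arguments. Unset Strict Implicit. Unset Printing Implicit Defensive.

Definition tournament (T : finType) (e : rel T) : Prop :=
  (forall x, ~~ e x x) /\ (forall x y, x != y -> e x y = ~~ e y x).

Definition walk_of_length (T : finType) (e : rel T) (k : nat) (i j : T) : Prop :=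
  exists s : seq T, [/\ size s = k, path e i s & last i s = j].

Definition digraph_iso (T : finType) (e1 e2 : rel T) : Prop :=
  exists f : T -> T, bijective f /\ forall x y, e1 x y = e2 (f x) (f y).

Definition good_tournament (e : rel 'I_6) : Prop :=
  tournament e /\
  forall (i j : 'I_6) (k : nat), 3 <= k <= 5 ->
    walk_of_length e k i j /\ walk_of_length e k j i.

(* Main.v *)
Require Import Defs.
From mathcomp Require Import all_boot.
Set Implicit Arguments. Unset Strict Implicit. Unset Printing Implicit Defensive.

Definition pairs6 : seq (nat * nat) :=
  flatten [seq [seq (a, b) | b <- iota a.+1 (5 - a)] | a <- iota 0 6].
Definition dec (s : seq bool) (a b : nat) : bool :=
  if a < b then nth false s (index (a, b) pairs6)
  else if b < a then ~~ nth false s (index (b, a) pairs6) else false.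
Definition mat s := [seq [seq dec s a b | b <- iota 0 6] | a <- iota 0 6].
Definition adj (M : seq (seq bool)) a b := nth false (nth [::] M a) b.
Definition stepR M (R : seq bool) : seq bool :=
  [seq has (fun v => nth false R v && adj M v j) (iota 0 6) | j <- iota 0 6].
Fixpoint reach M k i : seq bool :=
  match k with 0 => [seq i == j | j <- iota 0 6]
  | k'.+1 => let R := reach M k' i in stepR M R end.
Definition goodM M := all (fun i => let R3 := reach M 3 i in let R4 := stepR M R3 in
   let R5 := stepR M R4 in all id R3 && all id R4 && all id R5) (iota 0 6).
Fixpoint allbits n : seq (seq bool) :=
  match n with 0 => [:: [::]] | n'.+1 => let A := allbits n' in
    [seq true :: t | t <- A] ++ [seq false :: t | t <- A] end.
Definition s0 := [:: true; true; true; false; false; true; false; true; true; true; true; false; false; true; true].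
Definition isoM M M0 p := all (fun a => nth 0 p a < 6) (iota 0 6) &&
  all (fun a => all (fun b => adj M a b == adj M0 (nth 0 p a) (nth 0 p b)) (iota 0 6)) (iota 0 6).
Definition perms6 := permutations (iota 0 6).
Definition bigcheck := let P := perms6 in let M0 := mat s0 in
  all (fun s => let M := mat s in if goodM M then has (isoM M M0) P else true) (allbits 15).
Lemma bigcheck_ok : bigcheck. Proof. vm_compute. reflexivity. Qed.

Lemma walk0 (T : finType) (e : rel T) x y : walk_of_length e 0 x y <-> x = y.
Proof.
split; first by case=> s [/size0nil -> _ /=].
by move=> ->; exists [::].
Qed.

Lemma walkS (T : finType) (e : rel T) k x y :
  walk_of_length e k.+1 x y <-> exists v, walk_of_length e k x v /\ e v y.
Proof.
split.
  case=> s [hs hp hl]; case/lastP: s hs hp hl => [//|s v].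
  rewrite size_rcons => -[hs]; rewrite rcons_path last_rcons => /andP[hp he] hl.
  exists (last x s); split; first by exists s.
  by rewrite -hl.
case=> v [[s [hs hp hl]] he]; exists (rcons s y).
by rewrite size_rcons hs rcons_path hp last_rcons hl he.
Qed.

Lemma walk_eq (T : finType) (e1 e2 : rel T) k x y : e1 =2 e2 ->
  walk_of_length e1 k x y -> walk_of_length e2 k x y.
Proof. by move=> h [s [hs hp hl]]; exists s; rewrite (eq_path h) in hp. Qed.

Definition decode (s : seq bool) : rel 'I_6 := fun x y => dec s x y.

Lemma dec_tour s : tournament (decode s).
Proof.
split; first by move=> x; rewrite /decode /dec ltnn.
move=> x y; rewrite -val_eqE /decode /dec /=.
by case: ltngtP => //; rewrite negbK.
Qed.

Lemma size_reach M k i : size (reach M k i) = 6.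
Proof. by case: k. Qed.

Lemma adjE s (a b : 'I_6) : adj (mat s) a b = dec s a b.
Proof.
rewrite /adj /mat (nth_map 0) ?size_iota // nth_iota // (nth_map 0) ?size_iota //.
by rewrite nth_iota.
Qed.

Lemma reach0 M i : reach M 0 i = [seq i == j | j <- iota 0 6]. Proof. by []. Qed.
Lemma reachS M k i : reach M k.+1 i = stepR M (reach M k i). Proof. by []. Qed.
Lemma stepRE M R : stepR M R = [seq has (fun v => nth false R v && adj M v j) (iota 0 6) | j <- iota 0 6]. Proof. by []. Qed.

Lemma reachP s k (x j : 'I_6) :
  nth false (reach (mat s) k x) j <-> walk_of_length (decode s) k x j.
Proof.
elim: k j => [|k IH] j.
  apply: iff_trans (iff_sym (walk0 _ _ _)).
  rewrite reach0 (nth_map 0) ?size_iota // nth_iota // add0n.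
  by split=> [/eqP/val_inj|->].
apply: iff_trans (iff_sym (walkS _ _ _ _)).
rewrite reachS stepRE (nth_map 0) ?size_iota // nth_iota // add0n.
split.
  case/hasP=> v; rewrite mem_iota add0n => hv /andP[h1 h2].
  exists (Ordinal hv); split; first by apply/IH.
  by rewrite /decode -adjE.
case=> v [/IH h1 h2]; apply/hasP; exists (val v); first by rewrite mem_iota ltn_ord.
by rewrite h1 adjE.
Qed.

Lemma goodM_good s : good_tournament (decode s) <-> goodM (mat s).
Proof.
split.
  case=> _ h; apply/allP=> i; rewrite mem_iota add0n => hi.
  have hw k j : 3 <= k <= 5 -> j < 6 -> nth false (reach (mat s) k (Ordinal hi)) j.
    move=> hk hj; have := (h (Ordinal hi) (Ordinal hj) k hk).1.
    by move/reachP.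
  have hall k : 3 <= k <= 5 -> all id (reach (mat s) k i).
    move=> hk; apply/(all_nthP false) => j; rewrite size_reach => hj; exact: hw.
  apply/andP; split; [apply/andP; split|]; [exact: (hall 3) | exact: (hall 4) | exact: (hall 5)].
move=> /allP h; split; first exact: dec_tour.
have hw k (i j : 'I_6) : 3 <= k <= 5 -> walk_of_length (decode s) k i j.
  move=> hk; apply/reachP; have := h i; rewrite mem_iota ltn_ord => /(_ isT).
  move=> /andP[/andP[h3 h4] h5].
  have hk' : all id (reach (mat s) k i).
    by case: k hk => [|[|[|[|[|[|k]]]]]] hk.
  by move/(all_nthP false): hk'; apply; rewrite size_reach.
by move=> i j k hk; split; apply: hw.
Qed.

Definition bits (e : rel 'I_6) : seq bool := [seq e (inord p.1) (inord p.2) | p <- pairs6].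

Lemma bits_size e : size (bits e) = 15.
Proof. by rewrite size_map. Qed.

Lemma bitsE e : tournament e -> e =2 decode (bits e).
Proof.
case=> hirr htour x y; rewrite /decode /dec.
have hp : all (fun a => all (fun b => (a < b) ==> ((a,b) \in pairs6)) (iota 0 6)) (iota 0 6) by [].
have hin (a b : 'I_6) : a < b -> (val a, val b) \in pairs6.
  move=> hab; move/allP: hp => /(_ a); rewrite mem_iota ltn_ord => /(_ isT).
  by move/allP => /(_ b); rewrite mem_iota ltn_ord => /(_ isT) /implyP; apply.
have hn (a b : 'I_6) : a < b -> nth false (bits e) (index (val a, val b) pairs6) = e a b.
  move=> hab; rewrite /bits (nth_map (0,0)) ?index_mem ?hin // nth_index ?hin //=.
  by rewrite !inord_val.
case: ltngtP => h.
- by rewrite hn.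
- rewrite hn // htour ?negbK // -val_eqE /= neq_ltn h orbT //.
- have -> : x = y by apply/val_inj.
  by rewrite (negbTE (hirr y)).
Qed.

Lemma allbits_mem n s : size s = n -> s \in allbits n.
Proof.
elim: n s => [|n IH] [|b t] //= [ht]; rewrite mem_cat.
by case: b; [rewrite map_f ?IH | rewrite map_f ?orbT ?IH].
Qed.

Theorem mainTheorem16 :
  exists e : rel 'I_6, good_tournament e /\
    forall e' : rel 'I_6, good_tournament e' -> digraph_iso e' e.
Proof.
exists (decode s0); split.
  by apply/goodM_good; vm_compute.
move=> e' he'; have ht := he'.1; set s := bits e'.
have hE : e' =2 decode s := bitsE ht.
have hg : goodM (mat s).
  apply/goodM_good; split; first exact: dec_tour.
  move=> i j k hk; case: (he'.2 i j k hk) => h1 h2.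
  by split; apply: walk_eq hE _.
have hin : s \in allbits 15 by apply: allbits_mem; apply: bits_size.
have := bigcheck_ok; rewrite /bigcheck => /allP /(_ s hin) H.
have : if goodM (mat s) then has (isoM (mat s) (mat s0)) perms6 else true := H.
rewrite hg => /hasP[p _ /andP[hb hiso]].
have hbx (x : 'I_6) : nth 0 p x < 6.
  by move/allP: hb => /(_ x); rewrite mem_iota ltn_ord; apply.
pose f (x : 'I_6) : 'I_6 := inord (nth 0 p x).
have hrel x y : e' x y = decode s0 (f x) (f y).
  rewrite hE /decode -adjE.
  move/allP: hiso => /(_ x); rewrite mem_iota ltn_ord => /(_ isT).
  move/allP => /(_ y); rewrite mem_iota ltn_ord => /(_ isT) /eqP ->.
  by rewrite -adjE /f !inordK.
exists f; split; last exact: hrel.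
apply: injF_bij => x y hxy; apply/eqP/negPn/negP => hne.
have := ht.2 x y hne; rewrite !hrel hxy.
by rewrite (negbTE ((dec_tour s0).1 (f y))).
Qed.
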